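(* Let $(H_n)_{n\ge0}$ be the monic Hermite polynomials ($H_0=1$, $H_{-1}=0$, $H_n=xH_{n-1}-\tfrac{n-1}{2}H_{n-2}$), with coefficients $H_n(x)=\sum_{i=0}^n b_{n,i}x^i$ (convention $b_{m,m}=1$, $b_{m,l}=0$ for $l>m$). Let $(\gamma_m)_{m\ge1}$ be nonzero complex numbers with $\gamma_m\gamma_{m+1}=-\tfrac m2$ for all $m\ge1$. For integers $n\ge k\ge1$ and $0\le t\le k-1$ let $E_{k,n,t}$ be the determinant of the $(k-t-1)\times(k-t-1)$ matrix with $(\rho,c)$ entry $b_{n-k+t+1+c,\;n-k+t+\rho}$ ($E_{k,n,k-1}=1$), and define $$\Sigma_H(n,k)=\sum_{\substack{0\le j\le k-1\\ j \text{ even}}}\frac{(-1)^{j/2}}{2^j}\frac{(n-k+j)!}{(n-k)!\,(j/2)!}\sum_{r=1}^{k-j}\gamma_{n-k+j+1}\cdots\gamma_{n-k+j+r}\,E_{k,n,j+r-1}.$$ If $n$ is even, $k$ is odd and $n\ge k\ge3$, then $\Sigma_H(n,k)\neq0$.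
   Context: The hypothesis on $(\gamma_m)$ is the paper's standing assumption that $H_n^{(1)}=H_n+\gamma_nH_{n-1}$ is a Geronimus transformation of the Hermite polynomials normalized by $\gamma_2+\frac{1}{2\gamma_1}=0$, which yields $\gamma_m\gamma_{m+1}=-m/2$. *)

(* Defs.v *)
From HB Require Import structures.
From mathcomp Require Import all_boot all_order all_algebra.
From mathcomp Require Import reals complex.
Set Implicit Arguments. Unset Strict Implicit. Unset Printing Implicit Defensive.
Import Order.TTheory GRing.Theory Num.Theory.
Local Open Scope ring_scope.

Section Hermite.
Variable F : fieldType.

(* herm2 n = (H_{n-1}, H_n), with H_{-1} = 0, H_0 = 1 and
   H_{n+1} = x H_n - n/2 H_{n-1}   (i.e. H_n = x H_{n-1} - (n-1)/2 H_{n-2}). *)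
Fixpoint herm2 (n : nat) : {poly F} * {poly F} :=
  match n with
  | 0 => (0, 1)
  | n'.+1 => let: (a, b) := herm2 n' in (b, 'X * b - (n'%:R / 2) *: a)
  end.

Definition hermite (n : nat) : {poly F} := (herm2 n).2.

Definition hcoef (n i : nat) : F := (hermite n)`_i.

Definition Ekn (k n t : nat) : F :=
  \det (\matrix_(i < k - t - 1, j < k - t - 1)
          hcoef (n - k + t + 1 + j.+1) (n - k + t + i.+1)).

Definition SigmaH (g : nat -> F) (n k : nat) : F :=
  \sum_(0 <= j < k | ~~ odd j)
    ((-1) ^+ (j./2) / 2 ^+ j) *
    ((n - k + j)`!%:R / ((n - k)`!%:R * (j./2)`!%:R)) *
    \sum_(1 <= r < (k - j).+1)
       (\prod_(n - k + j + 1 <= i < n - k + j + r + 1) g i) * Ekn k n (j + r - 1).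

End Hermite.

(* Main.v *)
Require Import Defs.
From HB Require Import structures.
From mathcomp Require Import all_boot all_order all_algebra.
From mathcomp Require Import reals complex.
From mathcomp Require Import zify ring lra.
Set Implicit Arguments. Unset Strict Implicit. Unset Printing Implicit Defensive.
Import Order.TTheory GRing.Theory Num.Theory.
Local Open Scope ring_scope.

Ltac nzs := repeat (apply/andP; split); try assumption; rewrite ?nat1r ?natr1 -?natrD ?pnatr_eq0 ?expf_neq0 //.

Section H.
Variable F : numFieldType.

Lemma herm2_fst (n : nat) : (herm2 F n.+1).1 = hermite F n.
Proof. by rewrite /hermite /=; case: (herm2 F n). Qed.

Lemma hermite0 : hermite F 0 = 1. Proof. by []. Qed.
Lemma hermite1 : hermite F 1 = 'X.
Proof. by rewrite /hermite /= mulr1 mul0r scale0r subr0. Qed.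

Lemma hermiteSS (n : nat) :
  hermite F n.+2 = 'X * hermite F n.+1 - (n.+1%:R / 2) *: hermite F n.
Proof.
rewrite {1}/hermite /=. rewrite -herm2_fst /hermite /=.
by case: (herm2 F n) => a b /=.
Qed.

Lemma hcoefSS (n i : nat) :
  hcoef F n.+2 i = (if i == 0%N then 0 else hcoef F n.+1 i.-1) - n.+1%:R / 2 * hcoef F n i.
Proof. by rewrite /hcoef hermiteSS coefB coefXM coefZ. Qed.

Lemma hcoef_props (n : nat) :
  (forall i, (n < i)%N -> hcoef F n i = 0) /\ hcoef F n n = 1.
Proof.
elim: n {-2}n (leqnn n) => [|N IH] n hn.
  move: hn; rewrite leqn0 => /eqP ->; rewrite /hcoef hermite0; split.
    by move=> i hi; rewrite coefC; case: i hi.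
  by rewrite coefC.
case: n hn => [|[|n]] hn.
- by apply: (IH 0%N).
- rewrite /hcoef hermite1; split; last by rewrite coefX.
  by move=> i hi; rewrite coefX; case: i hi => [|[|]].
- have [IH1a IH1b] := IH n.+1 hn.
  have [IH0a IH0b] := IH n (ltnW hn).
  split.
    move=> i hi; rewrite hcoefSS; case: i hi => [//|i] hi /=.
    by rewrite IH1a // IH0a ?mulr0 ?subr0 //; lia.
  by rewrite hcoefSS /= IH1b IH0a ?mulr0 ?subr0.
Qed.

Lemma hcoef_gt (n i : nat) : (n < i)%N -> hcoef F n i = 0.
Proof. by case: (hcoef_props n) => h _; apply: h. Qed.
Lemma hcoef_nn (n : nat) : hcoef F n n = 1.
Proof. by case: (hcoef_props n). Qed.


Definition Acl (Q p : nat) : F :=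
  (Q + p.*2)`!%:R / (Q`!%:R * p`!%:R * 4 ^+ p).

Definition Acoef (R Q : nat) : F :=
  if (Q <= R)%N && ~~ odd (R - Q) then Acl Q ((R - Q)./2) else 0.

Lemma Acoef_spec (R Q : nat) :
  (exists p, R = (Q + p.*2)%N /\ Acoef R Q = Acl Q p) \/
  ((forall p, R <> (Q + p.*2)%N) /\ Acoef R Q = 0).
Proof.
rewrite /Acoef; case: ifP => h.
  left; exists ((R - Q)./2); split => //.
  move/andP: h => [h1 h2]; have := odd_double_half (R - Q); lia.
right; split => // p e; move: h; rewrite e; lia.
Qed.

Lemma Acl_eq (Q p : nat) : Acoef (Q + p.*2) Q = Acl Q p.
Proof.
case: (Acoef_spec (Q + p.*2) Q) => [[p' [e ->]]|[h _]].
  by have -> : p' = p by lia.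
by case: (h p).
Qed.

Lemma Acoef_0 (R Q : nat) : (forall p, R <> (Q + p.*2)%N) -> Acoef R Q = 0.
Proof. by case: (Acoef_spec R Q) => [[p [e _]] h|[_ ->]] //; case: (h p). Qed.

Lemma fact_neq0 (m : nat) : (m`!%:R : F) != 0.
Proof. by rewrite pnatr_eq0 -lt0n fact_gt0. Qed.

Lemma four_neq0 (m : nat) : (4 ^+ m : F) != 0.
Proof. by rewrite expf_neq0 // pnatr_eq0. Qed.

Lemma Acl_0 (Q : nat) : Acl Q 0 = 1.
Proof. by rewrite /Acl addn0 fact0 expr0 !mulr1 divff // fact_neq0. Qed.

Lemma Acoef_rec (R Q : nat) :
  Acoef R.+1 Q = (if Q is Q'.+1 then Acoef R Q' else 0) + Q.+1%:R / 2 * Acoef R Q.+1.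
Proof.
case: (Acoef_spec R.+1 Q) => [[p [e ->]]|[h ->]]; last first.
  rewrite (@Acoef_0 R Q.+1) ?mulr0 ?addr0; last by move=> p e; apply: (h p.+1); lia.
  case: Q h => [//|Q] h; rewrite Acoef_0 // => p e; apply: (h p); lia.
case: Q e => [|Q] e.
  case: p e => [//|p] e.
  have -> : R = (1 + p.*2)%N by lia.
  rewrite Acl_eq /Acl.
  have -> : (0 + p.+1.*2 = (p.*2).+2)%N by lia.
  have -> : (1 + p.*2 = (p.*2).+1)%N by lia.
  rewrite -!mul2n !factS !natrM exprS.
  have := fact_neq0 p; have := four_neq0 p; have := fact_neq0 (2 * p).
  move=> h1 h2 h3; rewrite fact0; field.
  nzs.
case: p e => [|p] e.
  have -> : R = (Q + 0.*2)%N by lia.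
  rewrite Acl_eq (@Acoef_0 _ Q.+2) ?mulr0 ?addr0; last by move=> p' e'; lia.
  by rewrite !Acl_0.
have -> : R = (Q + p.+1.*2)%N by lia.
rewrite Acl_eq.
have -> : (Q + p.+1.*2 = Q.+2 + p.*2)%N by lia.
rewrite Acl_eq /Acl.
have -> : (Q.+1 + p.+1.*2 = (Q + p.*2).+3)%N by lia.
have -> : (Q + p.+1.*2 = (Q + p.*2).+2)%N by lia.
have -> : (Q.+2 + p.*2 = (Q + p.*2).+2)%N by lia.
rewrite !factS !natrM exprS -!mul2n.
have := fact_neq0 p; have := four_neq0 p; have := fact_neq0 Q.
have := fact_neq0 (Q + 2 * p).
move=> h1 h2 h3 h4; field.
nzs.
Qed.

Lemma Acoef_gt (R Q : nat) : (R < Q)%N -> Acoef R Q = 0.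
Proof. by move=> h; apply: Acoef_0 => p e; lia. Qed.

Lemma X_hermite (Q : nat) :
  'X * hermite F Q = hermite F Q.+1 + (Q%:R / 2) *: hermite F Q.-1.
Proof.
case: Q => [|q]; first by rewrite hermite0 hermite1 mulr1 mul0r scale0r addr0.
by rewrite hermiteSS /= subrK.
Qed.

Lemma Xpow_herm (M R : nat) : (R < M)%N ->
  'X^R = \sum_(0 <= Q < M) Acoef R Q *: hermite F Q.
Proof.
case: M => [//|M].
elim: R => [|R IH] hR.
  rewrite big_nat_recl // big1_seq ?addr0.
    by rewrite /Acoef /= Acl_0 hermite0 scale1r expr0.
  by move=> i /andP[_ _]; rewrite Acoef_gt // scale0r.
rewrite exprS IH; last by lia.
rewrite mulr_sumr.
under eq_bigr do rewrite -scalerAr X_hermite scalerDr scalerA.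
rewrite big_split /=.
under [in RHS]eq_bigr do rewrite Acoef_rec scalerDl.
rewrite big_split /=; congr (_ + _).
  rewrite [in RHS]big_nat_recl // scale0r add0r big_nat_recr //= Acoef_gt ?scale0r ?addr0 //.
rewrite big_nat_recl // mul0r mulr0 scale0r add0r big_nat_recr //= Acoef_gt ?mulr0 ?scale0r ?addr0 //.
  by apply: eq_bigr => i _; rewrite mulrC.
lia.
Qed.


Lemma key_sum (N m p r : nat) : (p <= m)%N -> (r <= m)%N ->
  \sum_(q < m.+1) hcoef F (N + 1 + q) (N + 1 + p) * Acoef (N + 1 + r) (N + 1 + q)
  = (p == r)%:R.
Proof.
move=> hp hr.
have := @Xpow_herm (N + 1 + m.+1) (N + 1 + r).
move=> /(_ ltac:(lia)) e0; have := congr1 (fun P : {poly F} => P`_(N + 1 + p)) e0 => /=.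
rewrite coefXn coef_sum.
rewrite (big_cat_nat _ (n := N + 1)) //=; last by lia.
rewrite big1_seq ?add0r; last first.
  move=> i; rewrite mem_index_iota => /andP[_ hi].
  by rewrite coefZ [_`_ _]hcoef_gt ?mulr0 //; lia.
rewrite (big_addn 0 _ (N + 1)).
have -> : (N + 1 + m.+1 - (N + 1) = m.+1)%N by lia.
rewrite big_mkord => e.
have -> : (p == r) = (N + 1 + p == N + 1 + r)%N by rewrite eqn_add2l.
rewrite e; apply: eq_bigr => i _.
by rewrite coefZ mulrC [(i + _)%N]addnC.
Qed.

Definition Tm (N m : nat) : 'M[F]_(m.+1) := \matrix_(p, q) hcoef F (N + 1 + q) (N + 1 + p).
Definition Sm (N m : nat) : 'M[F]_(m.+1) := \matrix_(q, r) Acoef (N + 1 + r) (N + 1 + q).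

Lemma TS (N m : nat) : Tm N m *m Sm N m = 1%:M.
Proof.
apply/matrixP => p r; rewrite !mxE.
rewrite -(key_sum N (ltnSE (ltn_ord p)) (ltnSE (ltn_ord r))).
by apply: eq_bigr => q _; rewrite !mxE.
Qed.

Lemma detT (N m : nat) : \det (Tm N m) = 1.
Proof.
rewrite -det_tr det_trig.
  by apply: big1 => i _; rewrite !mxE hcoef_nn.
apply/is_trig_mxP => i j hij; rewrite !mxE hcoef_gt //; lia.
Qed.

Lemma adjT (N m : nat) : \adj (Tm N m) = Sm N m.
Proof.
rewrite -[LHS]mulmx1 -(TS N m) mulmxA mul_adj_mx detT mul1mx //.
Qed.

Lemma Edet (N m : nat) :
  \det (\matrix_(i < m, j < m) hcoef F (N + 1 + j.+1) (N + i.+1))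
  = (-1) ^+ m * Acoef (N + 1 + m) (N + 1).
Proof.
have := congr1 (fun A : 'M_(m.+1) => A ord0 ord_max) (adjT N m).
rewrite /= !mxE addn0 /cofactor /= addn0 => <-.
rewrite signrMK; congr (\det _).
apply/matrixP => i j; rewrite !mxE lift_max lift0 /=.
by congr (hcoef _ _ _); lia.
Qed.


Definition Xc (a L : nat) : F := (a + L.*2)`!%:R / (a`!%:R * 4 ^+ L * L`!%:R).

Lemma Xstep (a L : nat) :
  Acl a.+1 L.+1 - (a.+2%:R / 2) * Xc a.+2 L = Xc a L.+1.
Proof.
rewrite /Acl /Xc.
have -> : (a.+1 + L.+1.*2 = (a + 2 * L).+3)%N by lia.
have -> : (a.+2 + L.*2 = (a + 2 * L).+2)%N by lia.
have -> : (a + L.+1.*2 = (a + 2 * L).+2)%N by lia.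
rewrite !factS !natrM exprS.
have := fact_neq0 a; have := four_neq0 L; have := fact_neq0 L.
have := fact_neq0 (a + 2 * L).
move=> h1 h2 h3 h4; field.
nzs.
Qed.

Lemma Acoef_nn (Q : nat) : Acoef Q Q = 1.
Proof. by have := Acl_eq Q 0; rewrite addn0 Acl_0. Qed.


Variable g : nat -> F.
Hypothesis hg : forall m : nat, (1 <= m)%N -> g m * g m.+1 = - (m%:R / 2).

Definition Iinner (a L : nat) : F :=
  \sum_(1 <= r < L.*2.+2)
    (\prod_(a + 1 <= i < a + r + 1) g i) * ((-1) ^+ (L.*2.+1 - r) * Acoef (a + L.*2.+1) (a + r)).

Lemma Iinner_eq (L a : nat) : Iinner a L = g (a + 1) * Xc a L.
Proof.
elim: L a => [|L IH] a.
  rewrite /Iinner double0 big_nat1 [(a + 1 + 1)%N]addn1 big_nat1 subnn expr0 mul1r Acoef_nn mulr1.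
  by rewrite /Xc double0 addn0 expr0 fact0 mulr1 mulr1 divff ?mulr1 // fact_neq0.
rewrite /Iinner.
have -> : (L.+1.*2.+2 = (L.*2.+3).+1)%N by [].
rewrite big_nat_recl // big_nat_recl //.
have -> : \sum_(1 <= i < L.*2.+2)
   (\prod_(a + 1 <= i0 < a + i.+2 + 1) g i0) *
   ((-1) ^+ (L.+1.*2.+1 - i.+2) * Acoef (a + L.+1.*2.+1) (a + i.+2))
  = g (a + 1) * g (a + 2) * Iinner (a + 2) L.
  rewrite /Iinner mulr_sumr; apply: eq_big_nat => i /andP[hi1 hi2].
  rewrite big_ltn; last by lia.
  rewrite big_ltn; last by lia.
  rewrite !mulrA; congr (_ * _ * _ * _ * _).
  - by congr (g _); lia.
  - have -> : ((a + 1).+2 = a + 2 + 1)%N by lia.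
    by have -> : (a + i.+2 + 1 = a + 2 + i + 1)%N by lia.
  - by congr (Acoef _ _); lia.
rewrite IH.
have -> : g (a + 1) * g (a + 2) * (g (a + 2 + 1) * Xc (a + 2) L)
   = g (a + 1) * (g (a + 2) * g (a + 2).+1) * Xc (a + 2) L.
  by rewrite [(a + 2 + 1)%N]addn1; ring.
rewrite hg; last by lia.
rewrite (@Acoef_0 (a + L.+1.*2.+1) (a + 2)); last by move=> p e; lia.
have -> : (a + L.+1.*2.+1 = a.+1 + L.+1.*2)%N by lia.
have -> : (a + 1 = a.+1)%N by lia.
rewrite Acl_eq [(a.+1 + 1)%N]addn1 big_nat1.
have -> : (L.+1.*2.+1 - 1 = L.+1.*2)%N by lia.
rewrite -signr_odd odd_double expr0 !mulr0 add0r mul1r.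
rewrite -Xstep.
have -> : (a + 2 = a.+2)%N by lia.
ring.
Qed.


Definition Pr (d J : nat) : F :=
  \prod_(0 <= l < J) ((d + 2 + l.*2)%:R / (d + 1 + l.*2)%:R).
Definition Nn (K : nat) : F := \prod_(0 <= i < K) ((i.*2)%:R - 1).
Definition Dd (d K : nat) : F := \prod_(0 <= i < K) (d + 1 + i.*2)%:R.

Lemma Dd_neq0 (d K : nat) : Dd d K != 0.
Proof.
rewrite /Dd prodf_seq_neq0; apply/allP => i _ /=.
by rewrite pnatr_eq0 addn1.
Qed.

Lemma Nn_neq0 (K : nat) : Nn K != 0.
Proof.
rewrite /Nn prodf_seq_neq0; apply/allP => i _ /=.
rewrite subr_eq0 -[1]/(1%:R) eqr_nat; apply/negP => /eqP; lia.
Qed.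

Lemma Pr_S (d J : nat) :
  Pr d J.+1 = (d + 2)%:R / (d + 1)%:R * Pr (d + 2) J.
Proof.
rewrite /Pr big_nat_recl // double0 !addn0; congr (_ * _).
apply: eq_big_nat => l _; congr (_%:R / _%:R); rewrite doubleS; lia.
Qed.

Lemma chu (K d : nat) :
  \sum_(0 <= J < K.+1) (-1) ^+ J * 'C(K, J)%:R * Pr d J = Nn K / Dd d K.
Proof.
elim: K d => [|K IH] d.
  by rewrite big_nat1 /Pr /Nn /Dd !big_geq // expr0 bin0 divr1 !mul1r.
rewrite big_nat_recl //.
under eq_big_nat => J _ do rewrite binS natrD mulrDr mulrDl.
rewrite big_split /= addrA.
have -> : (-1) ^+ 0 * 'C(K.+1, 0)%:R * Pr d 0 +
    \sum_(0 <= i < K.+1) (-1) ^+ i.+1 * 'C(K, i.+1)%:R * Pr d i.+1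
    = \sum_(0 <= J < K.+1) (-1) ^+ J * 'C(K, J)%:R * Pr d J.
  rewrite [RHS]big_nat_recl // [in LHS]big_nat_recr //= (@bin_small K K.+1) // mulr0 mul0r addr0.
  by rewrite !bin0.
have -> : \sum_(0 <= i < K.+1) (-1) ^+ i.+1 * 'C(K, i)%:R * Pr d i.+1
    = - ((d + 2)%:R / (d + 1)%:R) * \sum_(0 <= J < K.+1) (-1) ^+ J * 'C(K, J)%:R * Pr (d + 2) J.
  rewrite mulr_sumr; apply: eq_big_nat => i _.
  rewrite Pr_S exprS; ring.
rewrite !IH.
have eD1 : Dd d K.+1 = Dd d K * (d + 1 + K.*2)%:R by rewrite /Dd big_nat_recr.
have eD2 : Dd d K.+1 = (d + 1)%:R * Dd (d + 2) K.
  rewrite /Dd big_nat_recl // double0 addn0; congr (_ * _).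
  apply: eq_big_nat => l _; congr (_%:R); rewrite doubleS; lia.
have eN : Nn K.+1 = Nn K * ((K.*2)%:R - 1) by rewrite /Nn big_nat_recr.
have eD3 : Dd (d + 2) K = Dd d K * (d + 1 + K.*2)%:R / (d + 1)%:R.
  rewrite -eD1 eD2 mulrC mulrA mulVf ?mul1r //.
  by rewrite pnatr_eq0 addn1.
rewrite eD3 eN eD1.
have h1 := Dd_neq0 d K.
have h2 : (d + 1)%:R != 0 :> F by rewrite pnatr_eq0 addn1.
have h3 : (d + 1 + K.*2)%:R != 0 :> F by rewrite pnatr_eq0 addn1 addSn.
have -> : (d + 1 + K.*2)%:R = (d + 1)%:R + (K.*2)%:R :> F by rewrite natrD.
have -> : (d + 2)%:R = (d + 1)%:R + 1 :> F by rewrite !natrD; ring.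
move: h3; rewrite natrD => h3.
field.
nzs.
Qed.


Lemma g_rel (d J : nat) : g (d + 1 + J.*2) = g (d + 1) * Pr d J.
Proof.
elim: J => [|J IH].
  by rewrite double0 addn0 /Pr big_geq // mulr1.
have -> : Pr d J.+1 = Pr d J * ((d + 2 + J.*2)%:R / (d + 1 + J.*2)%:R) by rewrite /Pr big_nat_recr.
rewrite mulrA -IH doubleS.
set m := (d + 1 + J.*2)%N.
have -> : (d + 1 + J.*2.+2 = m.+2)%N by rewrite /m; lia.
have -> : (d + 2 + J.*2 = m.+1)%N by rewrite /m; lia.
have hm : (1 <= m)%N by rewrite /m; lia.
have e : g m.+2 * (g m * g m.+1) = g m * (g m.+1 * g m.+2) by ring.
rewrite hg // hg // in e.
have hm0 : m%:R != 0 :> F by rewrite pnatr_eq0 -lt0n.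
have -> : g m.+2 = (g m.+2 * - (m%:R / 2)) / (- (m%:R / 2)).
  by field; nzs; rewrite oppr_eq0.
rewrite e; rewrite -natr1; field.
nzs.
Qed.

End H.

Lemma even_sum (F : numFieldType) (k K : nat) (f : nat -> F) : k = K.*2.+1 ->
  \sum_(0 <= j < k | ~~ odd j) f j = \sum_(0 <= J < K.+1) f (J.*2).
Proof.
move=> ->; rewrite big_mkcond /=.
elim: K => [|K IH]; first by rewrite !big_nat1.
rewrite doubleS big_nat_recr //= big_nat_recr //= IH [in RHS]big_nat_recr //=.
by rewrite odd_double /= addr0.
Qed.

Lemma term_alg (F : numFieldType) (J L d : nat) :
  ((-1) ^+ ((J.*2)./2) / 2 ^+ (J.*2)) * ((d + J.*2)`!%:R / (d`!%:R * ((J.*2)./2)`!%:R))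
    * Xc F (d + J.*2) L
  = (-1) ^+ J * 'C(J + L, J)%:R * Xc F d (J + L).
Proof.
rewrite doubleK /Xc.
have -> : (d + J.*2 + L.*2 = d + (J + L).*2)%N by lia.
have hb := bin_fact (leq_addr L J).
have e : (J + L - J = L)%N by lia.
rewrite e in hb.
have -> : ('C(J + L, J)%:R : F) = (J + L)`!%:R / (J`!%:R * L`!%:R).
  rewrite -hb natrM natrM mulfK //.
  by rewrite mulf_neq0 // fact_neq0.
rewrite exprD -mul2n exprM.
have -> : (2 ^+ 2 : F) = 4 by rewrite expr2 -natrM.
have := fact_neq0 F J; have := fact_neq0 F L; have := fact_neq0 F d.
have := fact_neq0 F (d + J.*2); have := fact_neq0 F (J + L).
have := four_neq0 F J; have := four_neq0 F L.
move=> h1 h2 h3 h4 h5 h6 h7.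
field.
nzs; by rewrite -lt0n fact_gt0.
Qed.

Theorem theorem5 (R : realType) (g : nat -> R[i]) (n k : nat) :
  (forall m : nat, (1 <= m)%N -> g m != 0) ->
  (forall m : nat, (1 <= m)%N -> g m * g m.+1 = - (m%:R / 2)) ->
  ~~ odd n -> odd k -> (3 <= k)%N -> (k <= n)%N ->
  SigmaH g n k != 0.
Proof.
move=> hnz hg hn hk hk3 hkn.
set K := k./2.
have eK : k = K.*2.+1 by rewrite /K; lia.
set d := (n - k)%N.
rewrite /SigmaH (even_sum _ eK).
have -> : \sum_(0 <= J < K.+1)
   (-1) ^+ (J.*2)./2 / 2 ^+ J.*2 * ((n - k + J.*2)`!%:R / ((n - k)`!%:R * (J.*2)./2`!%:R)) *
   \sum_(1 <= r < (k - J.*2).+1)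
      (\prod_(n - k + J.*2 + 1 <= i < n - k + J.*2 + r + 1) g i) * Ekn _ k n (J.*2 + r - 1)
  = \sum_(0 <= J < K.+1) g (d + 1) * Xc _ d K * ((-1) ^+ J * 'C(K, J)%:R * Pr _ d J).
  apply: eq_big_nat => J /andP[_ hJ].
  have hJK : (J <= K)%N by lia.
  have -> : \sum_(1 <= r < (k - J.*2).+1)
      (\prod_(n - k + J.*2 + 1 <= i < n - k + J.*2 + r + 1) g i) * Ekn _ k n (J.*2 + r - 1)
      = Iinner g (n - k + J.*2) (K - J).
    rewrite /Iinner.
    have -> : ((k - J.*2).+1 = (K - J).*2.+2)%N by lia.
    apply: eq_big_nat => r /andP[hr1 hr2]; congr (_ * _).
    rewrite /Ekn Edet; congr (_ ^+ _ * Acoef _ _ _); lia.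
  rewrite Iinner_eq //.
  have -> : (n - k + J.*2 + 1 = d + 1 + J.*2)%N by rewrite /d; lia.
  rewrite g_rel //.
  rewrite -/d.
  rewrite (_ : forall a b y x : R[i], a * (b * y * x) = b * y * (a * x)); last by move=> *; ring.
  have eKL : K = (J + (K - J))%N by lia.
  rewrite term_alg [in RHS]eKL.
  ring.
rewrite -mulr_sumr chu.
apply: mulf_neq0; first apply: mulf_neq0.
- by apply: hnz; lia.
- rewrite /Xc mulf_neq0 ?fact_neq0 // invr_neq0 // !mulf_neq0 ?fact_neq0 ?four_neq0 //.
- by rewrite mulf_neq0 ?Nn_neq0 // invr_neq0 // Dd_neq0.
Qed.
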